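(* Let $(X,\langle\cdot|\cdot\rangle)$, $A$, $B$, $C$, $Y$, $H$, $\hat B$, $V$ be as in the context, and let $\lambda\in\mathbb{C}$. Consider $A+C-\lambda B-\lambda^2$ as an operator with domain $D(A)$. (i) $H+\hat B+V-\lambda$ is not injective if and only if $A+C-\lambda B-\lambda^2$ is not injective; in that case $\ker(H+\hat B+V-\lambda)=\{(\xi,i\lambda\xi):\xi\in\ker(A+C-\lambda B-\lambda^2)\}$. (ii) $H+\hat B+V-\lambda$ is bijective if and only if $A+C-\lambda B-\lambda^2$ is bijective; in that case, for all $\eta=(\eta_1,\eta_2)\in Y$, $(H+\hat B+V-\lambda)^{-1}\eta=(\xi,i(\lambda\xi+\eta_1))$ where $\xi=(A+C-\lambda B-\lambda^2)^{-1}[(B+\lambda)\eta_1-i\eta_2]$.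
   Context: $(X,\langle\cdot|\cdot\rangle)$ is a nontrivial complex Hilbert space with norm $\|\cdot\|$. $A:D(A)\to X$ is a densely defined self-adjoint linear operator with $\langle\xi|A\xi\rangle\geqslant\varepsilon\langle\xi|\xi\rangle$ for all $\xi\in D(A)$ for some $\varepsilon>0$; $A^{1/2}$ is its positive self-adjoint square root. $B:D(A^{1/2})\to X$ is linear with $\|B\xi\|^2\leqslant a^2\|A^{1/2}\xi\|^2+b^2\|\xi\|^2$ for all $\xi\in D(A^{1/2})$, for some $a\in[0,1)$, $b\in\mathbb{R}$, and $B$ is symmetric or bounded. $C:D(A^{1/2})\to X$ is linear with $\|C\xi\|^2\leqslant c^2\|A^{1/2}\xi\|^2+d^2\|\xi\|^2$ for all $\xi\in D(A^{1/2})$, for some real $c,d$. $Y:=D(A^{1/2})\times X$ with inner product $(\xi|\eta):=\langle A^{1/2}\xi_1|A^{1/2}\eta_1\rangle+\langle\xi_2|\eta_2\rangle$. $H:D(A)\times D(A^{1/2})\to Y$, $H\xi:=(-i\xi_2,iA\xi_1)$; $\hat B:D(H)\to Y$, $\hat B\xi:=(0,-B\xi_2)$; $V:Y\to Y$, $V\xi:=(0,iC\xi_1)$; $H+\hat B+V-\lambda$ has domain $D(H)$. *)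

(* Defs.v *)
From HB Require Import structures.
From mathcomp Require Import all_boot all_order all_algebra.
From mathcomp Require Import complex.
From mathcomp Require Import reals.
Set Implicit Arguments. Unset Strict Implicit. Unset Printing Implicit Defensive.
Import Order.TTheory GRing.Theory Num.Theory ComplexField.
Local Open Scope ring_scope.

(* A complex inner product space: vector space X over C := R[i] with an
   inner product ip, antilinear in the first and linear in the second
   argument (physics convention <.|.>). *)
Definition is_inner_product (R : realType) (X : lmodType R[i])
  (ip : X -> X -> R[i]) : Prop :=
  [/\ (forall (a : R[i]) (x y z : X), ip x (a *: y + z) = a * ip x y + ip x z),
      (forall x y : X, ip y x = (ip x y)^*),
      (forall x : X, 0 <= ip x x) &
      (forall x : X, ip x x = 0 -> x = 0)].

Definition ipnorm (R : realType) (X : lmodType R[i]) (ip : X -> X -> R[i])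
  (x : X) : R := Num.sqrt (complex.Re (ip x x)).

Definition ip_complete (R : realType) (X : lmodType R[i])
  (ip : X -> X -> R[i]) : Prop :=
  forall u : nat -> X,
    (forall e : R, 0 < e -> exists N, forall m n, (N <= m)%N -> (N <= n)%N ->
        ipnorm ip (u m - u n) < e) ->
    exists l : X, forall e : R, 0 < e -> exists N, forall n, (N <= n)%N ->
        ipnorm ip (u n - l) < e.

Definition is_hilbert (R : realType) (X : lmodType R[i])
  (ip : X -> X -> R[i]) : Prop := is_inner_product ip /\ ip_complete ip.

Definition dense_in (R : realType) (X : lmodType R[i]) (ip : X -> X -> R[i])
  (D : X -> Prop) : Prop :=
  forall x : X, forall e : R, 0 < e -> exists y, D y /\ ipnorm ip (x - y) < e.

Definition subspace (R : realType) (X : lmodType R[i]) (D : X -> Prop) : Prop :=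
  D 0 /\ forall (a : R[i]) (x y : X), D x -> D y -> D (a *: x + y).

(* T : D -> X is linear (T is represented by a total function, only its
   values on D matter) *)
Definition linear_on (R : realType) (X : lmodType R[i]) (D : X -> Prop)
  (T : X -> X) : Prop :=
  subspace D /\ forall (a : R[i]) (x y : X), D x -> D y ->
    T (a *: x + y) = a *: T x + T y.

Definition symmetric_on (R : realType) (X : lmodType R[i])
  (ip : X -> X -> R[i]) (D : X -> Prop) (T : X -> X) : Prop :=
  forall x y, D x -> D y -> ip (T x) y = ip x (T y).

Definition adj_dom (R : realType) (X : lmodType R[i])
  (ip : X -> X -> R[i]) (D : X -> Prop) (T : X -> X) (y : X) : Prop :=
  exists z : X, forall x, D x -> ip y (T x) = ip z x.

(* densely defined self-adjoint operator T with domain D: T symmetric and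
   D(T^* ) is contained in D (hence T = T^* ) *)
Definition self_adjoint (R : realType) (X : lmodType R[i])
  (ip : X -> X -> R[i]) (D : X -> Prop) (T : X -> X) : Prop :=
  [/\ linear_on D T, dense_in ip D, symmetric_on ip D T &
      forall y, adj_dom ip D T y -> D y].

Definition is_pos_sqrt (R : realType) (X : lmodType R[i])
  (ip : X -> X -> R[i]) (DA : X -> Prop) (A : X -> X)
  (DS : X -> Prop) (S : X -> X) : Prop :=
  [/\ self_adjoint ip DS S,
      (forall x, DS x -> 0 <= ip x (S x)),
      (forall x, DA x <-> (DS x /\ DS (S x))) &
      (forall x, DA x -> S (S x) = A x)].

Definition bounded_on (R : realType) (X : lmodType R[i])
  (ip : X -> X -> R[i]) (D : X -> Prop) (T : X -> X) : Prop :=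
  exists M : R, forall x, D x -> ipnorm ip (T x) <= M * ipnorm ip x.

Definition op_injective (T U : Type) (D : T -> Prop) (f : T -> U) : Prop :=
  forall x y, D x -> D y -> f x = f y -> x = y.

Definition op_bijective (T U : Type) (D : T -> Prop) (E : U -> Prop)
  (f : T -> U) : Prop :=
  [/\ op_injective D f, (forall x, D x -> E (f x)) &
      (forall y, E y -> exists x, D x /\ f x = y)].

(* The operators of the paper.  Y = D(A^{1/2}) x X, D(H) = D(A) x D(A^{1/2}). *)
Definition Ymem (R : realType) (X : lmodType R[i]) (DS : X -> Prop)
  (p : X * X) : Prop := DS p.1.

Definition DH (R : realType) (X : lmodType R[i]) (DA DS : X -> Prop)
  (p : X * X) : Prop := DA p.1 /\ DS p.2.

Definition Hop (R : realType) (X : lmodType R[i]) (A : X -> X) (p : X * X)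
  : X * X := (- ('i *: p.2), 'i *: A p.1).

Definition Bhat (R : realType) (X : lmodType R[i]) (B : X -> X) (p : X * X)
  : X * X := (0, - B p.2).

Definition Vop (R : realType) (X : lmodType R[i]) (C : X -> X) (p : X * X)
  : X * X := (0, 'i *: C p.1).

Definition Top (R : realType) (X : lmodType R[i]) (A B C : X -> X)
  (lam : R[i]) (p : X * X) : X * X :=
  Hop A p + Bhat B p + Vop C p - lam *: p.

Definition Lop (R : realType) (X : lmodType R[i]) (A B C : X -> X)
  (lam : R[i]) (x : X) : X :=
  A x + C x - lam *: B x - lam ^+ 2 *: x.

(* Main.v *)
Require Import Defs.
From HB Require Import structures.
From mathcomp Require Import all_boot all_order all_algebra.
From mathcomp Require Import complex.
From mathcomp Require Import reals.
Import Order.TTheory GRing.Theory Num.Theory ComplexField.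
Local Open Scope ring_scope.
Set Implicit Arguments. Unset Strict Implicit.



Section H.
Variables (R : realType) (X : lmodType R[i]).

Lemma Top_fst A B C lam (p : X * X) :
  (@Top R X A B C lam p).1 = - ('i *: p.2) - lam *: p.1.
Proof. by rewrite /Top /= !addr0. Qed.
Lemma Top_snd A B C lam (p : X * X) :
  (@Top R X A B C lam p).2 = 'i *: A p.1 - B p.2 + 'i *: C p.1 - lam *: p.2.
Proof. by []. Qed.

Lemma sub0 (D : X -> Prop) : subspace D -> D 0.
Proof. by case. Qed.
Lemma subZ (D : X -> Prop) a x : subspace D -> D x -> D (a *: x).
Proof. move=> [h0 h] hx; have := h a x 0 hx h0; by rewrite addr0. Qed.
Lemma subD (D : X -> Prop) x y : subspace D -> D x -> D y -> D (x + y).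
Proof. move=> [h0 h] hx hy; have := h 1 x y hx hy; by rewrite scale1r. Qed.

Lemma lin0 (D : X -> Prop) T : linear_on D T -> T 0 = 0.
Proof.
move=> [hs h]; have h0 := sub0 hs; have := h 1 0 0 h0 h0; rewrite !scale1r addr0 => e.
by apply: (addrI (T 0)); rewrite addr0 -e.
Qed.
Lemma linZ (D : X -> Prop) T a x : linear_on D T -> D x -> T (a *: x) = a *: T x.
Proof.
move=> hl hx; have := hl.2 a x 0 hx (sub0 hl.1); by rewrite addr0 (lin0 hl) addr0.
Qed.
Lemma linD (D : X -> Prop) T x y : linear_on D T -> D x -> D y -> T (x + y) = T x + T y.
Proof. move=> hl hx hy; have := hl.2 1 x y hx hy; by rewrite !scale1r. Qed.

Arguments linZ {D T a x}.
Arguments linD {D T x y}.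
Arguments lin0 {D T}.
Arguments subZ {D a x}.
Arguments subD {D x y}.
Arguments sub0 {D}.

Lemma Top_fst_dec A B C lam (p : X * X) :
  p = (p.1, 'i *: (lam *: p.1 + (@Top R X A B C lam p).1)).
Proof.
rewrite Top_fst; case: p => x y /=; congr (_, _).
by rewrite addrC addrNK scalerN scalerA mulCii scaleN1r opprK.
Qed.

Lemma Top_form (DS : X -> Prop) A B C lam x e :
  linear_on DS B -> DS x -> DS e ->
  @Top R X A B C lam (x, 'i *: (lam *: x + e)) =
  (e, 'i *: Lop A B C lam x - 'i *: B e - ('i * lam) *: e).
Proof.
move=> hB hx he.
have hS := hB.1.
rewrite [LHS]surjective_pairing Top_fst Top_snd /=; congr (_, _).
  by rewrite scalerA mulCii scaleN1r opprK addrAC subrr add0r.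
have hlx : DS (lam *: x) by apply: subZ.
rewrite (linZ hB); last by apply: subD.
rewrite (linD hB hlx he) (linZ hB hx).
rewrite /Lop !scalerDr !scalerN ?scalerBr !scalerA.
rewrite [lam * 'i]mulrC -[_ * _ * lam]mulrA -expr2 !opprD !addrA.
congr (_ - _); rewrite [RHS]addrAC; congr (_ - _).
rewrite [LHS]addrAC; congr (_ - _); by rewrite addrAC.
Qed.

Lemma iK (u : X) : (- 'i) *: ('i *: u) = u.
Proof. by rewrite scalerA mulNr mulCii opprK scale1r. Qed.
Lemma iI (u v : X) : 'i *: u = 'i *: v -> u = v.
Proof. by move/(congr1 (fun w => (- 'i) *: w)); rewrite !iK. Qed.

Lemma Top_fst_DS (DS : X -> Prop) A B C lam (p : X * X) :
  subspace DS -> DS p.1 -> DS p.2 -> DS (@Top R X A B C lam p).1.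
Proof.
move=> hS h1 h2; rewrite Top_fst; apply: subD => //; rewrite -scaleN1r;
  apply: subZ => //; exact: subZ.
Qed.

Lemma Top_p (DS : X -> Prop) A B C lam (p : X * X) :
  linear_on DS B -> DS p.1 -> DS p.2 ->
  @Top R X A B C lam p = ((Top A B C lam p).1,
     'i *: Lop A B C lam p.1 - 'i *: B (Top A B C lam p).1
       - ('i * lam) *: (Top A B C lam p).1).
Proof.
move=> hB h1 h2; have he := Top_fst_DS A B C lam hB.1 h1 h2.
set e := (Top A B C lam p).1 in he *.
by rewrite {1}(Top_fst_dec A B C lam p) -/e (Top_form _ _ _ hB).
Qed.
Lemma alg (u w e : X) : u + w + e - u - w = e.
Proof. by rewrite -(addrA (u + w + e)) -opprD addrAC subrr add0r. Qed.
End H.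

Unset Implicit Arguments.
Theorem theorem13 (R : realType) (X : lmodType R[i]) (ip : X -> X -> R[i])
  (DA : X -> Prop) (A : X -> X) (DS : X -> Prop) (S : X -> X)
  (B C : X -> X) (eps a b c d : R) (lam : R[i]) :
  is_hilbert ip ->
  (exists x : X, x <> 0) ->
  self_adjoint ip DA A ->
  0 < eps ->
  (forall x, DA x -> (eps%:C)%C * ip x x <= ip x (A x)) ->
  is_pos_sqrt ip DA A DS S ->
  linear_on DS B ->
  0 <= a -> a < 1 ->
  (forall x, DS x -> complex.Re (ip (B x) (B x)) <=
      a ^+ 2 * complex.Re (ip (S x) (S x)) + b ^+ 2 * complex.Re (ip x x)) ->
  (symmetric_on ip DS B \/ bounded_on ip DS B) ->
  linear_on DS C ->
  (forall x, DS x -> complex.Re (ip (C x) (C x)) <=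
      c ^+ 2 * complex.Re (ip (S x) (S x)) + d ^+ 2 * complex.Re (ip x x)) ->
  (* (i) *)
  ((~ op_injective (DH DA DS) (Top A B C lam) <->
    ~ op_injective DA (Lop A B C lam)) /\
   (~ op_injective (DH DA DS) (Top A B C lam) ->
    forall p : X * X,
      (DH DA DS p /\ Top A B C lam p = 0) <->
      (exists xi, (DA xi /\ Lop A B C lam xi = 0) /\ p = (xi, ('i * lam) *: xi))))
  /\
  (* (ii) *)
  ((op_bijective (DH DA DS) (Ymem DS) (Top A B C lam) <->
    op_bijective DA (fun _ => True) (Lop A B C lam)) /\
   (op_bijective (DH DA DS) (Ymem DS) (Top A B C lam) ->
    forall eta : X * X, Ymem DS eta ->
    forall xi : X, DA xi ->
      Lop A B C lam xi = B eta.1 + lam *: eta.1 - 'i *: eta.2 ->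
      DH DA DS (xi, 'i *: (lam *: xi + eta.1)) /\
      Top A B C lam (xi, 'i *: (lam *: xi + eta.1)) = eta)).

Proof.
move=> _ _ _ _ _ Hsq hB _ _ _ _ _ _.
have hS := hB.1.
case: Hsq => _ _ hdom _.
have hDA x : DA x -> DS x by move=> h; exact: ((hdom x).1 h).1.
have hB0 := lin0 hB.
have TF x e : DA x -> DS e -> Top A B C lam (x, 'i *: (lam *: x + e)) =
  (e, 'i *: Lop A B C lam x - 'i *: B e - ('i * lam) *: e).
  by move=> hx he; exact: (Top_form _ _ _ hB (hDA x hx) he).
have DHx x e : DA x -> DS e -> DH DA DS (x, 'i *: (lam *: x + e)).
  move=> hx he; split => //=; apply: subZ => //; apply: subD => //.
  by apply: subZ => //; apply: hDA.
have TP p : DH DA DS p -> Top A B C lam p = ((Top A B C lam p).1,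
     'i *: Lop A B C lam p.1 - 'i *: B (Top A B C lam p).1
       - ('i * lam) *: (Top A B C lam p).1).
  by move=> [h1 h2]; exact: (Top_p _ _ _ hB (hDA _ h1) h2).
have TP2 p : DH DA DS p -> (Top A B C lam p).2 =
     'i *: Lop A B C lam p.1 - 'i *: B (Top A B C lam p).1
       - ('i * lam) *: (Top A B C lam p).1.
  by move=> hp; exact: (congr1 snd (TP p hp)).
have Tz x : DA x -> Top A B C lam (x, 'i *: (lam *: x + 0)) = (0, 'i *: Lop A B C lam x).
  by move=> hx; rewrite TF ?hB0 ?scaler0 ?subr0 //; exact: sub0.
have injeq : op_injective (DH DA DS) (Top A B C lam) <-> op_injective DA (Lop A B C lam).
  split.
  - move=> hT x y hx hy e.
    have := hT _ _ (DHx x 0 hx (sub0 hS)) (DHx y 0 hy (sub0 hS)).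
    by rewrite !Tz // e => /(_ erefl) /(congr1 fst).
  - move=> hL p q hp hq e.
    have e1 : (Top A B C lam p).1 = (Top A B C lam q).1 by rewrite e.
    have := congr1 snd e; rewrite (TP2 p hp) (TP2 q hq) e1.
    move=> /addIr /addIr /iI /(hL _ _ hp.1 hq.1) e2.
    by rewrite [LHS](Top_fst_dec A B C lam p) [RHS](Top_fst_dec A B C lam q) e1 e2.
have fin eta xi : Ymem DS eta -> DA xi ->
      Lop A B C lam xi = B eta.1 + lam *: eta.1 - 'i *: eta.2 ->
      DH DA DS (xi, 'i *: (lam *: xi + eta.1)) /\
      Top A B C lam (xi, 'i *: (lam *: xi + eta.1)) = eta.
  move=> he hx e; split; first exact: DHx.
  rewrite TF // e; case: eta he e => e1 e2 /= he _; congr (_, _).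
  rewrite !scalerDr scalerN !scalerA mulCii scaleN1r opprK.
  exact: alg.
split.
  split.
    by split => [h1 h2|h1 h2]; apply: h1; apply/injeq.
  move=> _ p; split.
  - move=> [hp e].
    have e0 : (Top A B C lam p).1 = 0 by rewrite e.
    have h2 := TP2 p hp.
    rewrite e0 hB0 !scaler0 !subr0 e /= in h2.
    exists p.1; split.
      split; first exact: hp.1.
      by apply: iI; rewrite scaler0.
    by rewrite {1}(Top_fst_dec A B C lam p) e0 addr0 scalerA.
  - move=> [xi [[hx hl] ->]].
    have -> : ('i * lam) *: xi = 'i *: (lam *: xi + 0) by rewrite addr0 scalerA.
    split; first by apply: DHx => //; exact: sub0.
    by rewrite Tz // hl scaler0.
split.
  split.
  - case=> hi _ hs; split; [exact/injeq | by [] | move=> y _].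
    have [p [hp e]] := hs (0, 'i *: y) (sub0 hS).
    exists p.1; split; first exact: hp.1.
    have e0 : (Top A B C lam p).1 = 0 by rewrite e.
    have := TP2 p hp; rewrite e0 hB0 !scaler0 !subr0 e /=.
    by move=> /iI ->.
  - case=> hi _ hs; split; [exact/injeq | | move=> eta he].
      by move=> p [h1 h2]; apply: Top_fst_DS => //; apply: hDA.
    have [xi [hx e]] := hs (B eta.1 + lam *: eta.1 - 'i *: eta.2) I.
    exists (xi, 'i *: (lam *: xi + eta.1)); exact: (fin eta xi he hx e).
move=> _ eta he xi hx e; exact: fin.
Qed.
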